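(* Let $C_1$ be a positive squarefree integer and $q$ a prime. Let $(x, y, \alpha, p)$ be a solution in integers to \[ C_1x^2 + q^\alpha = y^p, \quad \gcd(C_1x, q, y) = 1, \quad x, y > 0, \quad \alpha > 0, \] with $y$ even and $p \ge 11$ prime. Let $\ell$ be a prime with $\ell = 2mp + 1$ for some integer $m > 0$ and $\ell \nmid 2qC_1y$. Let $\beta$ be the unique integer in $\{0, 1, \dots, 2p-1\}$ with $\beta \equiv \alpha \pmod{2p}$. Then there exists $\omega \in \{0, 1, \dots, \ell-1\}$ with \[ (C_1\omega^2 + q^\beta)^{2m} \equiv 1 \pmod \ell \] such that the reduction of $F_{x,\alpha}$ over $\mathbb{F}_\ell$ is either isomorphic to the curve \[ F_{\omega,\beta}/\mathbb{F}_\ell: Y^2 + XY = X^3 + \frac{C_1\omega - 1}{4}X^2 + \frac{C_1^2\omega^2 + C_1q^\beta}{64}X \] or to its quadratic twist by $q \bmod \ell$.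
   Context: $F_{x,\alpha}$ is the elliptic curve over $\mathbb{Q}$ given by $Y^2 + XY = X^3 + \frac{C_1x-1}{4}X^2 + \frac{C_1^2x^2 + C_1q^\alpha}{64}X$. Coefficients of $F_{\omega,\beta}$ are interpreted in $\mathbb{F}_\ell$ (division by $4$ and $64$ being inversion modulo the odd prime $\ell$). *)

(* Defs.v *)
From HB Require Import structures.
From mathcomp Require Import all_boot all_order all_algebra.
Set Implicit Arguments. Unset Strict Implicit. Unset Printing Implicit Defensive.
Import Order.TTheory GRing.Theory Num.Theory.
Local Open Scope ring_scope.

Definition squarefree (n : nat) : Prop :=
  forall r : nat, prime r -> ~~ (r * r %| n)%N.

(* A (long) Weierstrass equation
   Y^2 + a1 XY + a3 Y = X^3 + a2 X^2 + a4 X + a6 over a field K. *)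
Record wcurve (K : Type) := WCurve { wa1 : K; wa2 : K; wa3 : K; wa4 : K; wa6 : K }.

(* Isomorphism over K: an admissible change of variables
   X = u^2 X' + r, Y = u^3 Y' + s u^2 X' + t, with u <> 0, carrying E to E'
   (Silverman, Table 3.1). *)
Definition wc_iso (K : fieldType) (E E' : wcurve K) : Prop :=
  exists u r s t : K, u != 0 /\
    u * wa1 E' = wa1 E + 2 * s /\
    u ^+ 2 * wa2 E' = wa2 E - s * wa1 E + 3 * r - s ^+ 2 /\
    u ^+ 3 * wa3 E' = wa3 E + r * wa1 E + 2 * t /\
    u ^+ 4 * wa4 E' = wa4 E - s * wa3 E + 2 * r * wa2 E - (t + r * s) * wa1 E
                      + 3 * r ^+ 2 - 2 * s * t /\
    u ^+ 6 * wa6 E' = wa6 E + r * wa4 E + r ^+ 2 * wa2 E + r ^+ 3 - t * wa3 E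
                      - t ^+ 2 - r * t * wa1 E.

(* Quadratic twist by d (for char K <> 2): E is isomorphic to
   Y^2 = X^3 + (b2/4) X^2 + (b4/2) X + b6/4 and its twist by d is
   Y^2 = X^3 + d (b2/4) X^2 + d^2 (b4/2) X + d^3 (b6/4). *)
Definition wc_twist (K : fieldType) (d : K) (E : wcurve K) : wcurve K :=
  let b2 := wa1 E ^+ 2 + 4 * wa2 E in
  let b4 := 2 * wa4 E + wa1 E * wa3 E in
  let b6 := wa3 E ^+ 2 + 4 * wa6 E in
  WCurve 0 (d * (b2 / 4)) 0 (d ^+ 2 * (b4 / 2)) (d ^+ 3 * (b6 / 4)).

(* The curve F : Y^2 + XY = X^3 + (C1 x - 1)/4 X^2 + (C1^2 x^2 + C1 Q)/64 X
   over a field K, where Q stands for q^alpha (resp. q^beta). *)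
Definition Fcurve (K : fieldType) (C1 : nat) (x Q : K) : wcurve K :=
  WCurve 1 ((C1%:R * x - 1) / 4) 0
           ((C1%:R ^+ 2 * x ^+ 2 + C1%:R * Q) / 64) 0.

(* Main.v *)
Require Import Defs.
From HB Require Import structures.
From mathcomp Require Import all_boot all_order all_algebra all_field.
From mathcomp Require Import ring zify.
Import Order.TTheory GRing.Theory Num.Theory.
Local Open Scope ring_scope.

Lemma iso_scale (K : fieldType) (C1 : nat) (x Q x' Q' u : K) :
  (2 : K) != 0 -> u != 0 -> x = x' * u ^+ 2 -> Q = Q' * u ^+ 4 ->
  wc_iso (Fcurve C1 x Q) (Fcurve C1 x' Q').
Proof.
move=> h2 hu -> ->.
have h4 : (4 : K) != 0.
  have -> : (4 : K) = 2 * 2 by rewrite -natrM.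
  by rewrite mulf_neq0.
have h64 : (64 : K) != 0.
  have -> : (64 : K) = 4 * 4 * 4 by rewrite -!natrM.
  by rewrite !mulf_neq0.
exists u, 0, ((u - 1) / 2), 0; rewrite /Fcurve /=.
split=> //.
do 4 (split; first by field; rewrite ?h2 ?h4 ?h64 ?hu).
by field; rewrite ?h2 ?h4 ?h64 ?hu.
Qed.

Lemma iso_twist (K : fieldType) (C1 : nat) (x Q x' Q' u d : K) :
  (2 : K) != 0 -> u != 0 -> d != 0 -> x = x' * d * u ^+ 2 -> Q = Q' * d ^+ 2 * u ^+ 4 ->
  wc_iso (Fcurve C1 x Q) (wc_twist d (Fcurve C1 x' Q')).
Proof.
move=> h2 hu hd -> ->.
have h4 : (4 : K) != 0.
  have -> : (4 : K) = 2 * 2 by rewrite -natrM.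
  by rewrite mulf_neq0.
have h64 : (64 : K) != 0.
  have -> : (64 : K) = 4 * 4 * 4 by rewrite -!natrM.
  by rewrite !mulf_neq0.
exists u, 0, (- 1 / 2), 0; rewrite /wc_twist /Fcurve /=.
split=> //.
do 4 (split; first by field; rewrite ?h2 ?h4 ?h64 ?hu ?hd).
by field; rewrite ?h2 ?h4 ?h64 ?hu ?hd.
Qed.

Theorem lemma7p1 (C1 q x y alpha p l m : nat) :
  (0 < C1)%N -> squarefree C1 -> prime q ->
  (C1 * x ^ 2 + q ^ alpha = y ^ p)%N ->
  gcdn (gcdn (C1 * x) q) y = 1%N ->
  (0 < x)%N -> (0 < y)%N -> (0 < alpha)%N ->
  ~~ odd y -> prime p -> (11 <= p)%N ->
  prime l -> (0 < m)%N -> l = (2 * m * p + 1)%N ->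
  ~~ (l %| 2 * q * C1 * y)%N ->
  let beta := (alpha %% (2 * p))%N in
  exists omega : nat, (omega < l)%N /\
    ((C1 * omega ^ 2 + q ^ beta) ^ (2 * m) = 1 %[mod l])%N /\
    (wc_iso (Fcurve C1 (x%:R : 'F_l) (q ^ alpha)%:R)
            (Fcurve C1 (omega%:R : 'F_l) (q ^ beta)%:R)
     \/
     wc_iso (Fcurve C1 (x%:R : 'F_l) (q ^ alpha)%:R)
            (wc_twist (q%:R : 'F_l) (Fcurve C1 (omega%:R : 'F_l) (q ^ beta)%:R))).
Proof.
move=> C1pos sqf qpr hEq hgcd xpos ypos apos yev ppr p11 lpr mpos hl hdiv beta.
have nz n : (n %| 2 * q * C1 * y)%N -> (n%:R : 'F_l) != 0.
  move=> hn; apply/eqP => h0; move: (congr1 (fun z : 'F_l => nat_of_ord z) h0); rewrite val_Fp_nat //= => h.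
  by move: hdiv; rewrite (dvdn_trans _ hn) //; apply/eqP.
have h2 : (2 : 'F_l) != 0 by apply: nz; apply: dvdn_mulr; apply: dvdn_mulr; apply: dvdn_mulr.
have hq : (q%:R : 'F_l) != 0 by apply: nz; apply: dvdn_mulr; apply: dvdn_mulr; apply: dvdn_mull.
have hy : (y%:R : 'F_l) != 0 by apply: nz; apply: dvdn_mull.
have hcard : #|'F_l| = (2 * m * p).+1 by rewrite card_Fp // hl addn1.
have ferm (a : 'F_l) : a != 0 -> a ^+ (2 * m * p) = 1.
  move=> ha; have := expf_card a; rewrite hcard exprS => h.
  by apply: (mulfI ha); rewrite mulr1.
have modE (a b : nat) : (a%:R : 'F_l) = b%:R -> (a = b %[mod l])%N.
  by move=> h; have := congr1 (fun z : 'F_l => nat_of_ord z) h; rewrite !val_Fp_nat.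
set k := (alpha %/ (2 * p))%N.
set n := (p * k)%N.
set tq : 'F_l := q%:R ^+ n.
have htq0 : tq != 0 by rewrite expf_neq0.
have hqa : ((q ^ alpha)%:R : 'F_l) = (q ^ beta)%:R * tq ^+ 2.
  rewrite {1}(divn_eq alpha (2 * p)) expnD natrM mulrC; congr (_ * _).
  rewrite natrX /tq -exprM; congr (_ ^+ _); rewrite /n /k; lia.
set w : 'F_l := x%:R / tq.
have wl : (nat_of_ord w < l)%N by have := ltn_ord w; move=> h; apply: (leq_trans h); rewrite Fp_cast.
have hw : ((nat_of_ord w)%:R : 'F_l) = w.
  by apply: val_inj; rewrite [LHS]/= val_Fp_nat // modn_small.
exists (nat_of_ord w); split.
  exact: wl.
split.
  have key : ((C1 * nat_of_ord w ^ 2 + q ^ beta)%:R : 'F_l) = (y%:R) ^+ p / tq ^+ 2.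
    have hy' : (y%:R : 'F_l) ^+ p = C1%:R * x%:R ^+ 2 + (q ^ alpha)%:R.
      by rewrite -natrX -hEq natrD natrM natrX.
    rewrite natrD natrM natrX hw hy' hqa /w; field.
    by rewrite htq0.
  have : ((C1 * nat_of_ord w ^ 2 + q ^ beta) ^ (2 * m))%:R = (1%N)%:R :> 'F_l.
    rewrite natrX key expr_div_n -!exprM.
    have -> : (p * (2 * m) = 2 * m * p)%N by lia.
    rewrite ferm // /tq.
    have -> : (n * (2 * (2 * m)) = 2 * m * p * (2 * k))%N by rewrite /n; lia.
    by rewrite exprM ferm // expr1n divr1.
  by apply: modE.
rewrite hw.
case: (boolP (odd n)) => hn.
  have htq : tq = q%:R * (q%:R ^+ n./2) ^+ 2.
    by rewrite /tq -{1}(odd_double_half n) hn exprD expr1 -exprM muln2.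
  right; apply: (@iso_twist _ _ _ _ _ _ (q%:R ^+ n./2)) => //.
  - by rewrite expf_neq0.
  - by rewrite /w htq; field; rewrite ?mulf_neq0 ?expf_neq0.
  - by rewrite hqa htq; ring.
have htq : tq = (q%:R ^+ n./2) ^+ 2.
  by rewrite /tq -{1}(odd_double_half n) (negbTE hn) add0n -exprM muln2.
left; apply: (@iso_scale _ _ _ _ _ _ (q%:R ^+ n./2)) => //.
- by rewrite expf_neq0.
- by rewrite /w htq; field; rewrite ?mulf_neq0 ?expf_neq0.
- by rewrite hqa htq; ring.
Qed.
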